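(* Let $n\ge 1$ and let $P\in\mathbb{R}^{n\times n}$ satisfy $\|P\|<1$. Let $w\in\mathbb{R}^n$ be a global maximizer of $$L(w)=\langle w,Pw\rangle-\sum_{i=1}^n\log\Big(\sum_{j=1}^n\exp(w_iw_j)\Big)$$ over $\mathbb{R}^n$. Then $$\|w\|^2\le\frac{n\log n}{1-\|P\|}.$$
   Context: $\|w\|$ denotes the Euclidean norm of $w$, $\langle\cdot,\cdot\rangle$ the standard inner product, and $\|P\|$ the operator norm of $P$ induced by the Euclidean norm. *)

(* Defs.v *)
From HB Require Import structures.
From mathcomp Require Import all_boot all_order all_algebra.
From mathcomp Require Import all_classical all_reals all_analysis.
Set Implicit Arguments. Unset Strict Implicit. Unset Printing Implicit Defensive.
Import Order.TTheory GRing.Theory Num.Theory.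
Local Open Scope ring_scope.
Local Open Scope classical_set_scope.

Definition eucl_norm (R : realType) (n : nat) (x : 'cV[R]_n) : R :=
  Num.sqrt (\sum_(i < n) x i 0 ^+ 2).

Definition inner (R : realType) (n : nat) (x y : 'cV[R]_n) : R :=
  \sum_(i < n) x i 0 * y i 0.

Definition op_norm (R : realType) (n : nat) (P : 'M[R]_n) : R :=
  sup [set eucl_norm (P *m x) | x in [set x : 'cV[R]_n | eucl_norm x = 1]].

Definition Lobj (R : realType) (n : nat) (P : 'M[R]_n) (w : 'cV[R]_n) : R :=
  inner w (P *m w) - \sum_(i < n) ln (\sum_(j < n) expR (w i 0 * w j 0)).

(* Main.v *)
Require Import Defs.
From HB Require Import structures.
From mathcomp Require Import all_boot all_order all_algebra.
From mathcomp Require Import all_classical all_reals all_analysis.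
From mathcomp Require Import ring lra.
Import Order.TTheory GRing.Theory Num.Theory.
Local Open Scope ring_scope.

Lemma cs_le (R : realType) (n : nat) (a b : 'I_n -> R) :
  \sum_i a i * b i <= Num.sqrt (\sum_i a i ^+ 2) * Num.sqrt (\sum_i b i ^+ 2).
Proof.
set SA := \sum_i a i ^+ 2; set SB := \sum_i b i ^+ 2.
have hA : 0 <= SA by apply: sumr_ge0 => i _; exact: sqr_ge0.
have hB : 0 <= SB by apply: sumr_ge0 => i _; exact: sqr_ge0.
have [A0|A0] := eqVneq SA 0.
  have ai : forall i, a i = 0.
    move=> i; apply/eqP; rewrite -sqrf_eq0; apply/eqP.
    by apply: (psumr_eq0P (P := predT) (fun i _ => sqr_ge0 (a i)) A0).
  rewrite big1 ?mulr_ge0 ?sqrtr_ge0 // => i _; by rewrite ai mul0r.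
have [B0|B0] := eqVneq SB 0.
  have bi : forall i, b i = 0.
    move=> i; apply/eqP; rewrite -sqrf_eq0; apply/eqP.
    by apply: (psumr_eq0P (P := predT) (fun i _ => sqr_ge0 (b i)) B0).
  rewrite big1 ?mulr_ge0 ?sqrtr_ge0 // => i _; by rewrite bi mulr0.
set A := Num.sqrt SA; set B := Num.sqrt SB.
have Ap : 0 < A by rewrite sqrtr_gt0 lt_def A0.
have Bp : 0 < B by rewrite sqrtr_gt0 lt_def B0.
have AA : A ^+ 2 = SA by rewrite sqr_sqrtr.
have BB : B ^+ 2 = SB by rewrite sqr_sqrtr.
have key : (\sum_i a i * b i) * (2 * A * B) <= SA * B ^+ 2 + SB * A ^+ 2.
  rewrite mulr_suml /SA /SB !mulr_suml -big_split /=.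
  apply: ler_sum => i _.
  have := sqr_ge0 (a i * B - b i * A); nra.
have ABp : 0 < 2 * A * B by rewrite !mulr_gt0.
rewrite -(ler_pM2r ABp); apply: (le_trans key).
rewrite -AA -BB; nra.
Qed.

Lemma cs_sq (R : realType) (n : nat) (a b : 'I_n -> R) :
  (\sum_i a i * b i) ^+ 2 <= (\sum_i a i ^+ 2) * (\sum_i b i ^+ 2).
Proof.
have hA : 0 <= \sum_i a i ^+ 2 by apply: sumr_ge0 => i _; exact: sqr_ge0.
have hB : 0 <= \sum_i b i ^+ 2 by apply: sumr_ge0 => i _; exact: sqr_ge0.
have h1 := @cs_le _ _ a b.
have h2 := @cs_le _ _ (fun i => - a i) b.
have e1 : \sum_i (- a i) * b i = - \sum_i a i * b i.
  by rewrite -sumrN; apply: eq_bigr => i _; rewrite mulNr.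
have e2 : \sum_i (- a i) ^+ 2 = \sum_i a i ^+ 2.
  by apply: eq_bigr => i _; rewrite sqrrN.
rewrite e1 e2 in h2.
rewrite -(sqr_sqrtr hA) -(sqr_sqrtr hB) -exprMn.
have := sqrtr_ge0 (\sum_i a i ^+ 2); have := sqrtr_ge0 (\sum_i b i ^+ 2).
nra.
Qed.

Lemma eucl_normZ (R : realType) (n : nat) (c : R) (x : 'cV[R]_n) :
  eucl_norm (c *: x) = `|c| * eucl_norm x.
Proof.
rewrite /eucl_norm -sqrtr_sqr -sqrtrM ?sqr_ge0 // mulr_sumr.
by congr Num.sqrt; apply: eq_bigr => i _; rewrite mxE exprMn.
Qed.

Lemma eucl_norm_ge0 (R : realType) (n : nat) (x : 'cV[R]_n) : 0 <= eucl_norm x.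
Proof. exact: sqrtr_ge0. Qed.

Lemma eucl_norm_sq (R : realType) (n : nat) (x : 'cV[R]_n) :
  eucl_norm x ^+ 2 = \sum_i x i 0 ^+ 2.
Proof. by rewrite sqr_sqrtr //; apply: sumr_ge0 => i _; exact: sqr_ge0. Qed.

Lemma op_norm_ub (R : realType) (n : nat) (P : 'M[R]_n) :
  has_ubound [set eucl_norm (P *m x) | x in [set x : 'cV[R]_n | eucl_norm x = 1]].
Proof.
exists (Num.sqrt (\sum_i \sum_j P i j ^+ 2)) => _ [x /= hx <-].
rewrite /eucl_norm ler_sqrt; last first.
  by apply: sumr_ge0 => i _; apply: sumr_ge0 => j _; exact: sqr_ge0.
have sx : \sum_j x j 0 ^+ 2 = 1 by rewrite -eucl_norm_sq hx expr1n.
apply: ler_sum => i _; rewrite mxE.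
by have := @cs_sq _ _ (fun j => P i j) (fun j => x j 0); rewrite sx mulr1.
Qed.

Lemma op_norm_bound (R : realType) (n : nat) (P : 'M[R]_n) (x : 'cV[R]_n) :
  eucl_norm (P *m x) <= op_norm P * eucl_norm x.
Proof.
have [x0|x0] := eqVneq (eucl_norm x) 0.
  have xi : forall i, x i 0 = 0.
    move=> i; apply/eqP; rewrite -sqrf_eq0; apply/eqP.
    have h : \sum_i x i 0 ^+ 2 = 0 by rewrite -eucl_norm_sq x0 expr0n.
    by apply: (psumr_eq0P (P := predT) (fun i _ => sqr_ge0 (x i 0)) h).
  have -> : x = 0 by apply/matrixP => i j; rewrite (ord1 j) xi mxE.
  have e0 : eucl_norm (0 : 'cV[R]_n) = 0.
    by rewrite /eucl_norm big1 ?sqrtr0 // => i _; rewrite mxE expr0n.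
  by rewrite mulmx0 e0 mulr0.
have np : 0 < eucl_norm x by rewrite lt_def x0 eucl_norm_ge0.
have h1 : eucl_norm ((eucl_norm x)^-1 *: x) = 1.
  by rewrite eucl_normZ ger0_norm ?invr_ge0 ?eucl_norm_ge0 // mulVf.
have h2 := ub_le_sup (@op_norm_ub _ _ P) (ex_intro2 _ _ _ h1 erefl).
rewrite -scalemxAr eucl_normZ ger0_norm ?invr_ge0 ?eucl_norm_ge0 // in h2.
rewrite -ler_pdivrMr // mulrC; exact: h2.
Qed.

Lemma inner_bound (R : realType) (n : nat) (P : 'M[R]_n) (w : 'cV[R]_n) :
  inner w (P *m w) <= op_norm P * eucl_norm w ^+ 2.
Proof.
have h1 := @cs_le _ _ (fun i => w i 0) (fun i => (P *m w) i 0).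
have h2 := @op_norm_bound _ _ P w.
have h3 := @eucl_norm_ge0 _ _ w.
apply: (le_trans h1); rewrite -/(eucl_norm w) -/(eucl_norm (P *m w)).
rewrite expr2 mulrA [_ * eucl_norm w]mulrC; exact: ler_wpM2l.
Qed.

Lemma Lobj_ub (R : realType) (n : nat) (P : 'M[R]_n) (w : 'cV[R]_n) :
  Lobj P w <= inner w (P *m w) - eucl_norm w ^+ 2.
Proof.
rewrite /Lobj lerD2l lerN2 eucl_norm_sq; apply: ler_sum => i _.
have hp : 0 < \sum_j expR (w i 0 * w j 0).
  rewrite (bigD1 i) //= ltr_pwDl ?expR_gt0 //.
  by apply: sumr_ge0 => j _; exact: ltW (expR_gt0 _).
rewrite -[X in X <= _]expRK ler_ln ?posrE ?expR_gt0 //.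
rewrite (bigD1 i) //= expr2 lerDl.
by apply: sumr_ge0 => j _; exact: ltW (expR_gt0 _).
Qed.

Lemma Lobj0 (R : realType) (n : nat) (P : 'M[R]_n) :
  Lobj P 0 = - (n%:R * ln (n%:R : R)).
Proof.
rewrite /Lobj /inner big1 ?sub0r; last by move=> i _; rewrite mxE mul0r.
congr (- _).
rewrite (eq_bigr (fun _ => ln (n%:R : R))).
  by rewrite sumr_const card_ord mulr_natl.
move=> i _; congr ln.
rewrite (eq_bigr (fun _ => 1)) ?sumr_const ?card_ord //.
by move=> j _; rewrite !mxE mul0r expR0.
Qed.

Theorem theorem3p2 (R : realType) (n : nat) (P : 'M[R]_n) (w : 'cV[R]_n) :
  (1 <= n)%N ->
  op_norm P < 1 ->
  (forall v : 'cV[R]_n, Lobj P v <= Lobj P w) ->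
  eucl_norm w ^+ 2 <= (n%:R * ln (n%:R : R)) / (1 - op_norm P).
Proof.
move=> _ hP hmax.
have h0 := hmax 0; rewrite Lobj0 in h0.
have h1 := @Lobj_ub _ _ P w.
have h2 := @inner_bound _ _ P w.
rewrite ler_pdivlMr ?subr_gt0 //.
nra.
Qed.
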